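(* Realize $\mathfrak{h}_3$ as the strictly upper triangular real $3\times3$ matrices, and write $M(x,y,z)$ for the matrix with entries $x$ at position $(1,2)$, $y$ at $(2,3)$, $z$ at $(1,3)$. For every $a\in\mathbb{R}$ and every continuous sublinear function $c:\mathbb{R}\to\mathbb{R}$, the function defined for $x\ne0$ by \[\zeta(M(x,y,z))=c(y/x)\cdot x+a\cdot y\] extends continuously to an $\mathrm{Ad}$-invariant Lie quasi-state on $\mathfrak{h}_3$ (with $\zeta(M(0,y,z))=a y$). Conversely, every continuous $\mathrm{Ad}$-invariant Lie quasi-state on $\mathfrak{h}_3$ is of this form.
   Context: A Lie quasi-state is $\zeta:\mathfrak{g}\to\mathbb{R}$ with $\zeta(aX+bY)=a\zeta(X)+b\zeta(Y)$ for all $a,b\in\mathbb{R}$ and commuting $X,Y$. $\mathrm{Ad}$-invariant means invariant under the adjoint group. A function $c:\mathbb{R}\to\mathbb{R}$ is sublinear if $c(s)/|s|\to0$ as $|s|\to\infty$. *)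

(* Defs.v *)
From Stdlib Require Import Reals Lra.
Open Scope R_scope.

(* Real 3x3 matrices, indices 0,1,2 (entries outside are irrelevant). *)
Definition Mat3 := nat -> nat -> R.

Definition mmul (A B : Mat3) : Mat3 :=
  fun i j => A i 0%nat * B 0%nat j + A i 1%nat * B 1%nat j + A i 2%nat * B 2%nat j.

Definition mat_eq (A B : Mat3) : Prop :=
  forall i j, (i < 3)%nat -> (j < 3)%nat -> A i j = B i j.

Definition id3 : Mat3 := fun i j => if Nat.eqb i j then 1 else 0.

Definition madd (A B : Mat3) : Mat3 := fun i j => A i j + B i j.

(* M(x,y,z): x at (1,2), y at (2,3), z at (1,3) (1-based), i.e.
   (0,1), (1,2), (0,2) 0-based; zero elsewhere. *)
Definition M (x y z : R) : Mat3 :=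
  fun i j =>
    match i, j with
    | 0%nat, 1%nat => x
    | 1%nat, 2%nat => y
    | 0%nat, 2%nat => z
    | _, _ => 0
    end.

(* h_3 = strictly upper triangular real 3x3 matrices, coordinatised by (x,y,z). *)
Record h3 := mkh3 { hx : R; hy : R; hz : R }.

Definition toM (X : h3) : Mat3 := M (hx X) (hy X) (hz X).

Definition h3_lin (a : R) (X : h3) (b : R) (Y : h3) : h3 :=
  mkh3 (a * hx X + b * hx Y) (a * hy X + b * hy Y) (a * hz X + b * hz Y).

Definition commute3 (X Y : h3) : Prop :=
  mat_eq (mmul (toM X) (toM Y)) (mmul (toM Y) (toM X)).

Definition lie_quasi_state (zeta : h3 -> R) : Prop :=
  forall (a b : R) (X Y : h3), commute3 X Y ->
    zeta (h3_lin a X b Y) = a * zeta X + b * zeta Y.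

(* The adjoint group of h_3 is {Ad_g : g in H_3}, H_3 = upper unitriangular
   matrices g = I + M(p,q,r); Ad_g X = g X g^{-1}, i.e. Y = Ad_g X iff Y g = g X. *)
Definition Ad_invariant (zeta : h3 -> R) : Prop :=
  forall (p q r : R) (X Y : h3),
    let g := madd id3 (M p q r) in
    mat_eq (mmul (toM Y) g) (mmul g (toM X)) ->
    zeta Y = zeta X.

Definition continuous_h3 (zeta : h3 -> R) : Prop :=
  forall (X : h3) (eps : R), 0 < eps ->
    exists delta, 0 < delta /\
      forall Y : h3,
        Rabs (hx Y - hx X) < delta -> Rabs (hy Y - hy X) < delta ->
        Rabs (hz Y - hz X) < delta ->
        Rabs (zeta Y - zeta X) < eps.

Definition sublinear (c : R -> R) : Prop :=
  forall eps : R, 0 < eps ->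
    exists N : R, forall s : R, N < Rabs s -> Rabs (c s / Rabs s) < eps.

(* Main.v *)
Require Import Defs.
From Stdlib Require Import Reals Lra Lia Psatz.
Open Scope R_scope.

Definition contX (F : h3 -> R) (X : h3) : Prop :=
  forall eps, 0 < eps -> exists d, 0 < d /\ forall Y,
    Rabs (hx Y - hx X) < d -> Rabs (hy Y - hy X) < d -> Rabs (hz Y - hz X) < d ->
    Rabs (F Y - F X) < eps.

Lemma cont_hx X : contX hx X.
Proof. intros e He; exists e; split; auto. Qed.
Lemma cont_hy X : contX hy X.
Proof. intros e He; exists e; split; auto. Qed.

Lemma cont_plus F G X : contX F X -> contX G X -> contX (fun Y => F Y + G Y) X.
Proof.
  intros HF HG eps He.
  destruct (HF (eps/2)) as [d1 [Hd1 H1]]; [lra|].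
  destruct (HG (eps/2)) as [d2 [Hd2 H2]]; [lra|].
  exists (Rmin d1 d2); split; [apply Rmin_pos; auto|].
  intros Y A B C.
  pose proof (Rmin_l d1 d2); pose proof (Rmin_r d1 d2).
  specialize (H1 Y ltac:(lra) ltac:(lra) ltac:(lra)).
  specialize (H2 Y ltac:(lra) ltac:(lra) ltac:(lra)).
  replace (F Y + G Y - (F X + G X)) with ((F Y - F X) + (G Y - G X)) by ring.
  eapply Rle_lt_trans; [apply Rabs_triang|lra].
Qed.

Lemma cont_comp F h X : contX F X -> continuity_pt h (F X) -> contX (fun Y => h (F Y)) X.
Proof.
  intros HF Hh eps He.
  unfold continuity_pt, continue_in, limit1_in, limit_in in Hh; simpl in Hh.
  destruct (Hh eps He) as [al [Hal H1]].
  destruct (HF al Hal) as [d [Hd H2]].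
  exists d; split; auto. intros Y A B C.
  destruct (Req_dec (F Y) (F X)) as [E|N].
  - rewrite E, Rminus_diag, Rabs_R0; auto.
  - apply H1. split. split. exact I. auto. apply H2; auto.
Qed.

Lemma cont_ext F G X : (forall Y, F Y = G Y) -> contX F X -> contX G X.
Proof.
  intros E HF eps He. destruct (HF eps He) as [d [Hd H]]. exists d; split; auto.
  intros Y A B C. rewrite <- !E. auto.
Qed.

Lemma cont_scal k F X : contX F X -> contX (fun Y => k * F Y) X.
Proof.
  intro H. apply (cont_comp F (fun t => k * t)); auto.
  exact (continuity_pt_scal id k _ (derivable_continuous_pt _ _ (derivable_pt_id _))).
Qed.

Lemma cont_sq F X : contX F X -> contX (fun Y => F Y * F Y) X.
Proof.
  intro H. apply (cont_comp F (fun t => t * t)); auto.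
  exact (continuity_pt_mult id id _ (derivable_continuous_pt _ _ (derivable_pt_id _)) (derivable_continuous_pt _ _ (derivable_pt_id _))).
Qed.

Lemma cont_mult F G X : contX F X -> contX G X -> contX (fun Y => F Y * G Y) X.
Proof.
  intros HF HG.
  apply (cont_ext (fun Y => /4 * ((F Y + G Y) * (F Y + G Y)) + (-/4) * ((F Y + -1 * G Y) * (F Y + -1 * G Y)))).
  { intro; field. }
  apply cont_plus; apply cont_scal; apply cont_sq; apply cont_plus; auto.
  apply cont_scal; auto.
Qed.

Lemma cont_inv F X : contX F X -> F X <> 0 -> contX (fun Y => / F Y) X.
Proof.
  intros H N. apply (cont_comp F (fun t => / t)); auto.
  exact (continuity_pt_inv id _ (derivable_continuous_pt _ _ (derivable_pt_id _)) N).
Qed.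

Lemma commute_lemma x y z x' y' z' : x * y' = x' * y ->
  commute3 (mkh3 x y z) (mkh3 x' y' z').
Proof.
  intros H i j Hi Hj.
  destruct i as [|[|[|i]]]; try lia; destruct j as [|[|[|j]]]; try lia;
  unfold mmul, toM, M; simpl; nra.
Qed.

Lemma commute_inv x y z x' y' z' : commute3 (mkh3 x y z) (mkh3 x' y' z') -> x * y' = x' * y.
Proof.
  intros H. specialize (H 0%nat 2%nat ltac:(lia) ltac:(lia)).
  unfold mmul, toM, M in H; simpl in H. nra.
Qed.

Lemma ad_mat x y z z' p q : z' = z + p * y - q * x ->
  mat_eq (mmul (toM (mkh3 x y z')) (madd id3 (M p q 0))) (mmul (madd id3 (M p q 0)) (toM (mkh3 x y z))).
Proof.
  intros H i j Hi Hj. subst z'.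
  destruct i as [|[|[|i]]]; try lia; destruct j as [|[|[|j]]]; try lia;
  unfold mmul, toM, M, madd, id3; simpl; ring.
Qed.

Lemma ad_inv X Y p q r : mat_eq (mmul (toM Y) (madd id3 (M p q r))) (mmul (madd id3 (M p q r)) (toM X)) ->
  hx Y = hx X /\ hy Y = hy X.
Proof.
  intros H. pose proof (H 0%nat 1%nat ltac:(lia) ltac:(lia)) as H1.
  pose proof (H 1%nat 2%nat ltac:(lia) ltac:(lia)) as H2.
  unfold mmul, toM, M, madd, id3 in H1, H2; simpl in H1, H2. split; lra.
Qed.

Lemma dir2 (zeta : h3 -> R) :
     continuous_h3 zeta -> lie_quasi_state zeta -> Ad_invariant zeta ->
     exists (a : R) (c : R -> R),
       continuity c /\ sublinear c /\
       (forall x y z, x <> 0 -> zeta (mkh3 x y z) = c (y / x) * x + a * y) /\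
       (forall y z, zeta (mkh3 0 y z) = a * y).
Proof.
  intros Hc Hq Ha.
  assert (hom : forall l x y z, zeta (mkh3 (l*x) (l*y) (l*z)) = l * zeta (mkh3 x y z)).
  { intros l x y z.
    assert (E : h3_lin l (mkh3 x y z) 0 (mkh3 x y z) = mkh3 (l*x) (l*y) (l*z))
      by (unfold h3_lin; simpl; f_equal; ring).
    rewrite <- E, Hq by (apply commute_lemma; ring). ring. }
  assert (ad : forall x y z z', (x <> 0 \/ y <> 0) -> zeta (mkh3 x y z') = zeta (mkh3 x y z)).
  { intros x y z z' [Hx|Hy].
    - apply (Ha 0 ((z - z')/x) 0). apply ad_mat. field. auto.
    - apply (Ha ((z' - z)/y) 0 0). apply ad_mat. field. auto. }
  assert (zero : forall z, zeta (mkh3 0 0 z) = 0).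
  { intro z.
    assert (E : h3_lin 1 (mkh3 1 0 z) (-1) (mkh3 1 0 0) = mkh3 0 0 z)
      by (unfold h3_lin; simpl; f_equal; ring).
    rewrite <- E, Hq by (apply commute_lemma; ring).
    rewrite (ad 1 0 0 z) by lra. ring. }
  set (a := zeta (mkh3 0 1 0)).
  set (g := fun s => zeta (mkh3 1 s 0)).
  exists a, (fun s => g s - a * s).
  assert (gc : forall s, continuity_pt g s).
  { intro s. unfold continuity_pt, continue_in, limit1_in, limit_in; simpl.
    intros eps He. destruct (Hc (mkh3 1 s 0) eps He) as [d [Hd H]].
    exists d; split; auto. intros x [_ Hx]. unfold R_dist in *. unfold g.
    apply H; simpl; try (rewrite Rminus_diag, Rabs_R0); auto. }
  split; [|split; [|split]].
  - intro s. exact (continuity_pt_minus g (mult_real_fct a id) s (gc s)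
      (continuity_pt_scal id a s (derivable_continuous_pt _ _ (derivable_pt_id _)))).
  - intros eps He. destruct (Hc (mkh3 0 1 0) eps He) as [d [Hd H]].
    exists (/ d). intros s Hs.
    assert (Hs0 : 0 < Rabs s) by (pose proof (Rinv_0_lt_compat d Hd); lra).
    assert (sn : s <> 0) by (intro E; rewrite E, Rabs_R0 in Hs0; lra).
    assert (Eg : g s = s * zeta (mkh3 (/ s) 1 0)).
    { unfold g. rewrite <- hom. f_equal; f_equal; field; auto. }
    assert (Hi : Rabs (/ s - 0) < d).
    { rewrite Rminus_0_r, Rabs_inv.
      apply (Rmult_lt_reg_l (Rabs s)); auto.
      rewrite Rinv_r by lra.
      apply (Rmult_lt_reg_l (/ d)); [apply Rinv_0_lt_compat; auto|].
      replace (/ d * (Rabs s * d)) with (Rabs s) by (field; lra). lra. }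
    specialize (H (mkh3 (/ s) 1 0) Hi).
    simpl in H. rewrite !Rminus_diag, !Rabs_R0 in H. specialize (H Hd Hd).
    rewrite Eg.
    replace ((s * zeta (mkh3 (/ s) 1 0) - a * s) / Rabs s)
      with ((zeta (mkh3 (/ s) 1 0) - a) * (s / Rabs s)) by (field; lra).
    rewrite Rabs_mult. unfold Rdiv. rewrite Rabs_mult, Rabs_inv, Rabs_Rabsolu, Rinv_r by lra.
    rewrite Rmult_1_r. exact H.
  - intros x y z Hx. rewrite (ad x y 0 z) by auto.
    replace (mkh3 x y 0) with (mkh3 (x*1) (x*(y/x)) (x*0)) by (f_equal; field; auto).
    rewrite hom. unfold g. field. auto.
  - intros y z. destruct (Req_dec y 0) as [Hy|Hy].
    + subst y. rewrite zero. ring.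
    + rewrite (ad 0 y 0 z) by auto.
      replace (mkh3 0 y 0) with (mkh3 (y*0) (y*1) (y*0)) by (f_equal; ring).
      rewrite hom. unfold a. ring.
Qed.

Lemma dir1_alg (a : R) (c : R -> R) (zeta : h3 -> R) :
     (forall x y z, x <> 0 -> zeta (mkh3 x y z) = c (y / x) * x + a * y) ->
     (forall y z, zeta (mkh3 0 y z) = a * y) ->
     lie_quasi_state zeta /\ Ad_invariant zeta.
Proof.
  intros Hx H0.
  assert (dep : forall x y z w, zeta (mkh3 x y z) = zeta (mkh3 x y w)).
  { intros x y z w. destruct (Req_dec x 0) as [E|E].
    - subst x. rewrite !H0. auto.
    - rewrite !Hx by auto. auto. }
  assert (hom : forall l x y z w, zeta (mkh3 (l*x) (l*y) z) = l * zeta (mkh3 x y w)).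
  { intros l x y z w. destruct (Req_dec l 0) as [El|El].
    - subst l. replace (0*x) with 0 by ring. rewrite H0. ring.
    - destruct (Req_dec x 0) as [E|E].
      + subst x. replace (l*0) with 0 by ring. rewrite !H0. ring.
      + rewrite !Hx by (try apply Rmult_integral_contrapositive; auto).
        replace (l*y/(l*x)) with (y/x) by (field; auto). ring. }
  split.
  - intros a' b [x y z] [x' y' z'] HC. apply commute_inv in HC.
    unfold h3_lin; simpl.
    destruct (Req_dec x 0) as [Ex|Ex]; [destruct (Req_dec y 0) as [Ey|Ey]|].
    + subst x y. replace (a'*0 + b*x') with (b*x') by ring.
      replace (a'*0 + b*y') with (b*y') by ring.
      rewrite (hom b x' y' _ z'). rewrite H0. ring.
    + subst x. assert (x' = 0) by nra. subst x'.
      set (mu := y'/y).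
      replace (a'*0 + b*0) with ((a'+b*mu)*0) by ring.
      replace (a'*y + b*y') with ((a'+b*mu)*y) by (unfold mu; field; auto).
      rewrite (hom _ 0 y _ z).
      replace (mkh3 0 y' z') with (mkh3 (mu*0) (mu*y) z') by (f_equal; unfold mu; try field; auto; ring).
      rewrite (hom mu 0 y z' z). ring.
    + set (mu := x'/x).
      assert (Ey' : y' = mu * y).
      { unfold mu; apply (Rmult_eq_reg_l x); [|auto].
        replace (x * (x'/x*y)) with (x'*y) by (field; auto). lra. }
      assert (Ex' : x' = mu * x) by (unfold mu; field; auto).
      rewrite Ey', Ex'.
      replace (a'*x + b*(mu*x)) with ((a'+b*mu)*x) by ring.
      replace (a'*y + b*(mu*y)) with ((a'+b*mu)*y) by ring.
      rewrite (hom _ x y _ z), (hom mu x y z' z). ring.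
  - intros p q r X Y g Hm. apply ad_inv in Hm. destruct Hm as [E1 E2].
    destruct X as [x y z], Y as [x' y' z']; simpl in *. subst. apply dep.
Qed.

Lemma dir1_cont (a : R) (c : R -> R) (zeta : h3 -> R) :
     continuity c -> sublinear c ->
     (forall x y z, x <> 0 -> zeta (mkh3 x y z) = c (y / x) * x + a * y) ->
     (forall y z, zeta (mkh3 0 y z) = a * y) ->
     continuous_h3 zeta.
Proof.
  intros Hcc Hsub Hx H0 X. change (contX zeta X).
  destruct X as [x0 y0 z0].
  destruct (Req_dec x0 0) as [E0|N0].
  2:{
    set (G := fun Y => c (hy Y * / hx Y) * hx Y + a * hy Y).
    assert (HG : contX G (mkh3 x0 y0 z0)).
    { unfold G. apply cont_plus; [apply cont_mult|apply cont_scal].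
      - apply (cont_comp (fun Y => hy Y * / hx Y) c).
        + apply cont_mult; [apply cont_hy|apply cont_inv; [apply cont_hx|auto]].
        + apply Hcc.
      - apply cont_hx.
      - apply cont_hy. }
    intros eps He. destruct (HG eps He) as [d [Hd H]].
    assert (Ha0 : 0 < Rabs x0) by (apply Rabs_pos_lt; auto).
    exists (Rmin d (Rabs x0)); split; [apply Rmin_pos; auto|].
    intros [x y z] A B C; simpl in A, B, C.
    pose proof (Rmin_l d (Rabs x0)); pose proof (Rmin_r d (Rabs x0)).
    assert (xn : x <> 0).
    { intro E; subst x. rewrite Rminus_0_l, Rabs_Ropp in A. lra. }
    rewrite !Hx by auto.
    specialize (H (mkh3 x y z)); unfold G in H; simpl in H.
    unfold Rdiv. apply H; lra. }
  subst x0.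
  intros eps He.
  set (e1 := eps / (3 * (Rabs y0 + 1))).
  assert (He1 : 0 < e1) by (unfold e1; apply Rdiv_lt_0_compat; [lra|pose proof (Rabs_pos y0); lra]).
  destruct (Hsub e1 He1) as [N HN].
  set (N1 := Rmax N 0).
  assert (HN1 : 0 <= N1) by apply Rmax_r.
  destruct (continuity_ab_maj (fun t => Rabs (c t)) (- N1) N1 ltac:(lra)) as [m [Hm _]].
  { intros t _. apply (continuity_pt_comp c Rabs). apply Hcc. apply Rcontinuity_abs. }
  set (K := Rabs (c m)).
  assert (HK : 0 <= K) by apply Rabs_pos.
  set (d := Rmin 1 (Rmin (eps / (3 * (K + 1))) (eps / (4 * (Rabs a + 1))))).
  assert (Hd1 : d <= 1) by apply Rmin_l.
  assert (Hd2 : d <= eps / (3 * (K + 1))) by (eapply Rle_trans; [apply Rmin_r|apply Rmin_l]).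
  assert (Hd3 : d <= eps / (4 * (Rabs a + 1))) by (eapply Rle_trans; [apply Rmin_r|apply Rmin_r]).
  assert (Hd : 0 < d).
  { unfold d. repeat apply Rmin_pos; try lra; apply Rdiv_lt_0_compat; try lra.
    pose proof (Rabs_pos a); lra. }
  exists d; split; auto.
  intros [x y z] A B C; simpl in A, B, C. rewrite Rminus_0_r in A.
  rewrite H0.
  pose proof (Rabs_pos a) as Pa.
  assert (Tay : Rabs (a * y - a * y0) <= eps / 4).
  { replace (a*y - a*y0) with (a * (y - y0)) by ring. rewrite Rabs_mult.
    assert (Rabs a * Rabs (y - y0) <= Rabs a * d) by (apply Rmult_le_compat_l; lra).
    assert (Rabs a * d <= eps / 4).
    { pose proof (Rmult_le_compat_l (4 * (Rabs a + 1)) _ _ ltac:(lra) Hd3) as T.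
      replace (4 * (Rabs a + 1) * (eps / (4 * (Rabs a + 1)))) with eps in T by (field; lra).
      nra. }
    lra. }
  destruct (Req_dec x 0) as [Ex|Ex].
  { subst x. rewrite H0. lra. }
  rewrite Hx by auto.
  set (s := y / x).
  assert (Tc : Rabs (c s * x) <= 2 * eps / 3).
  { rewrite Rabs_mult.
    destruct (Rle_lt_dec (Rabs s) N1) as [L|L].
    - assert (Rabs (c s) <= K) by (apply Hm; unfold Rabs in L; destruct (Rcase_abs s); lra).
      assert (Rabs (c s) * Rabs x <= K * d) by (apply Rmult_le_compat; try apply Rabs_pos; lra).
      assert (K * d <= eps / 3).
      { pose proof (Rmult_le_compat_l (3 * (K + 1)) _ _ ltac:(lra) Hd2) as T.
        replace (3 * (K + 1) * (eps / (3 * (K + 1)))) with eps in T by (field; lra).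
        nra. }
      lra.
    - assert (Ls : N < Rabs s) by (pose proof (Rmax_l N 0); unfold N1 in L; lra).
      specialize (HN s Ls).
      assert (sp : 0 < Rabs s) by lra.
      unfold Rdiv in HN. rewrite Rabs_mult, Rabs_inv, Rabs_Rabsolu in HN.
      assert (Rabs (c s) < e1 * Rabs s).
      { apply (Rmult_lt_reg_r (/ Rabs s)); [apply Rinv_0_lt_compat; auto|].
        replace (e1 * Rabs s * / Rabs s) with e1 by (field; lra). auto. }
      assert (Esx : Rabs s * Rabs x = Rabs y).
      { rewrite <- Rabs_mult. f_equal. unfold s. field. auto. }
      assert (Rabs y <= Rabs y0 + 1).
      { replace y with (y0 + (y - y0)) by ring.
        eapply Rle_trans; [apply Rabs_triang|lra]. }
      assert (Rabs (c s) * Rabs x <= e1 * Rabs s * Rabs x) by (apply Rmult_le_compat_r; [apply Rabs_pos|lra]).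
      assert (e1 * (Rabs y0 + 1) = eps / 3) by (unfold e1; field; pose proof (Rabs_pos y0); lra).
      assert (e1 * Rabs y <= e1 * (Rabs y0 + 1)) by (apply Rmult_le_compat_l; lra).
      rewrite Rmult_assoc, Esx in *. lra. }
  replace (c s * x + a * y - a * y0) with (c s * x + (a * y - a * y0)) by ring.
  eapply Rle_lt_trans; [apply Rabs_triang|lra].
Qed.

Theorem mainTheorem15 :
  (forall (a : R) (c : R -> R) (zeta : h3 -> R),
     continuity c -> sublinear c ->
     (forall x y z, x <> 0 -> zeta (mkh3 x y z) = c (y / x) * x + a * y) ->
     (forall y z, zeta (mkh3 0 y z) = a * y) ->
     continuous_h3 zeta /\ lie_quasi_state zeta /\ Ad_invariant zeta)
  /\
  (forall zeta : h3 -> R,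
     continuous_h3 zeta -> lie_quasi_state zeta -> Ad_invariant zeta ->
     exists (a : R) (c : R -> R),
       continuity c /\ sublinear c /\
       (forall x y z, x <> 0 -> zeta (mkh3 x y z) = c (y / x) * x + a * y) /\
       (forall y z, zeta (mkh3 0 y z) = a * y)).
Proof.
  split.
  - intros a c zeta Hc Hs Hx H0. split.
    + exact (dir1_cont a c zeta Hc Hs Hx H0).
    + exact (dir1_alg a c zeta Hx H0).
  - exact dir2.
Qed.
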